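(* Let $\mathrm{NT}=\{(x_1,x_2,x_3)\in\mathbb{R}^3: 2^kx_1+2\cdot 3^kx_2+5^kx_3\ge 0 \text{ for all integers } k\ge 0\}$ with topological boundary $\partial\mathrm{NT}$. Then for every integer $n\ge 0$, the point $\left(\frac{1}{2^n},-\frac{1}{3^n},\frac{1}{5^n}\right)$ lies in $\partial\mathrm{NT}$.
   Context: $\mathrm{NT}$ is the non-termination set of the loop ''while $(x_1+2x_2+x_3\ge 0)$ $\{(x_1,x_2,x_3):=(2x_1,3x_2,5x_3)\}$''. *)

(* Defs.v *)
From Stdlib Require Import Reals.
Open Scope R_scope.

Definition R3 : Type := (R * R * R)%type.

Definition dist3 (p q : R3) : R :=
  let '(p1, p2, p3) := p in
  let '(q1, q2, q3) := q in
  sqrt ((p1 - q1)^2 + (p2 - q2)^2 + (p3 - q3)^2).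

(* The non-termination set of
   while (x1 + 2 x2 + x3 >= 0) { (x1,x2,x3) := (2x1, 3x2, 5x3) } *)
Definition NT (x : R3) : Prop :=
  let '(x1, x2, x3) := x in
  forall k : nat, 2 ^ k * x1 + 2 * 3 ^ k * x2 + 5 ^ k * x3 >= 0.

Definition closure3 (S : R3 -> Prop) (p : R3) : Prop :=
  forall eps : R, eps > 0 -> exists q : R3, S q /\ dist3 p q < eps.

Definition interior3 (S : R3 -> Prop) (p : R3) : Prop :=
  exists eps : R, eps > 0 /\ forall q : R3, dist3 p q < eps -> S q.

Definition boundary3 (S : R3 -> Prop) (p : R3) : Prop :=
  closure3 S p /\ ~ interior3 S p.

(* Main.v *)
Require Import Defs.
From Stdlib Require Import Reals Lra Lia Psatz Arith.
Open Scope R_scope.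

Lemma pos_case (m : nat) : 2 ^ m - 2 * 3 ^ m + 5 ^ m >= 0.
Proof.
  assert (Hx : 0 < 2 ^ m) by (apply pow_lt; lra).
  assert (Hy : 0 < 5 ^ m) by (apply pow_lt; lra).
  assert (Hz : 0 < 3 ^ m) by (apply pow_lt; lra).
  assert (Hxy : 3 ^ m * 3 ^ m <= 2 ^ m * 5 ^ m).
  { rewrite <- !Rpow_mult_distr. apply pow_incr. lra. }
  assert (Hsq : (2 * 3 ^ m) * (2 * 3 ^ m) <= (2 ^ m + 5 ^ m) * (2 ^ m + 5 ^ m))
    by (pose proof (pow2_ge_0 (2 ^ m - 5 ^ m)); simpl in *; nra).
  destruct (Rle_lt_dec (2 * 3 ^ m) (2 ^ m + 5 ^ m)); [lra|].
  exfalso. assert ((2 ^ m + 5 ^ m) * (2 ^ m + 5 ^ m) < (2 * 3 ^ m) * (2 * 3 ^ m)).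
  { apply Rmult_le_0_lt_compat; lra. }
  lra.
Qed.

Lemma neg_case (s : nat) : (1 <= s)%nat -> 1 / 2 ^ s - 2 * (1 / 3 ^ s) + 1 / 5 ^ s >= 0.
Proof.
  intros Hs.
  assert (Hy : 0 < 5 ^ s) by (apply pow_lt; lra).
  assert (H5 : 0 < 1 / 5 ^ s) by (apply Rdiv_lt_0_compat; lra).
  destruct s as [|[|s']]; [lia| simpl; lra |].
  assert (Hx : 0 < 2 ^ s') by (apply pow_lt; lra).
  assert (Hz : 0 < 3 ^ s') by (apply pow_lt; lra).
  assert (H32 : 2 ^ s' <= 3 ^ s') by (apply pow_incr; lra).
  replace (2 ^ S (S s')) with (4 * 2 ^ s') by (simpl; ring).
  replace (3 ^ S (S s')) with (9 * 3 ^ s') by (simpl; ring).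
  assert (1 / (4 * 2 ^ s') - 2 * (1 / (9 * 3 ^ s')) >= 0).
  { unfold Rdiv. rewrite !Rmult_1_l.
    apply Rle_ge.
    apply Rle_trans with (2 * / (9 * 3 ^ s') - 2 * / (9 * 3 ^ s')); [lra|].
    apply Rplus_le_compat_r.
    apply Rmult_le_reg_l with (4 * 2 ^ s'); [lra|].
    rewrite Rinv_r by lra.
    apply Rmult_le_reg_l with (9 * 3 ^ s'); [lra|].
    field_simplify; [lra | lra]. }
  lra.
Qed.

Lemma inNT (n : nat) : NT (1 / 2 ^ n, - (1 / 3 ^ n), 1 / 5 ^ n).
Proof.
  unfold NT. intros k.
  assert (H2 : 0 < 2 ^ n) by (apply pow_lt; lra).
  assert (H3 : 0 < 3 ^ n) by (apply pow_lt; lra).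
  assert (H5 : 0 < 5 ^ n) by (apply pow_lt; lra).
  destruct (le_lt_dec n k) as [Hle|Hlt].
  - replace k with (n + (k - n))%nat by lia.
    rewrite !pow_add.
    pose proof (pos_case (k - n)).
    replace (2 ^ n * 2 ^ (k - n) * (1 / 2 ^ n) + 2 * (3 ^ n * 3 ^ (k - n)) * - (1 / 3 ^ n) +
      5 ^ n * 5 ^ (k - n) * (1 / 5 ^ n)) with (2 ^ (k - n) - 2 * 3 ^ (k - n) + 5 ^ (k - n))
      by (field; lra).
    exact H.
  - replace n with (k + (n - k))%nat by lia.
    rewrite !pow_add.
    assert (0 < 2 ^ k) by (apply pow_lt; lra).
    assert (0 < 3 ^ k) by (apply pow_lt; lra).
    assert (0 < 5 ^ k) by (apply pow_lt; lra).
    assert (0 < 2 ^ (n-k)) by (apply pow_lt; lra).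
    assert (0 < 3 ^ (n-k)) by (apply pow_lt; lra).
    assert (0 < 5 ^ (n-k)) by (apply pow_lt; lra).
    pose proof (neg_case (n - k) ltac:(lia)).
    replace (2 ^ k * (1 / (2 ^ k * 2 ^ (n - k))) + 2 * 3 ^ k * - (1 / (3 ^ k * 3 ^ (n - k))) +
      5 ^ k * (1 / (5 ^ k * 5 ^ (n - k)))) with
      (1 / 2 ^ (n - k) - 2 * (1 / 3 ^ (n - k)) + 1 / 5 ^ (n - k)) by (field; lra).
    assumption.
Qed.

Theorem lemma14 (n : nat) :
  boundary3 NT (1 / 2 ^ n, - (1 / 3 ^ n), 1 / 5 ^ n).
Proof.
  split.
  - intros eps He. exists (1 / 2 ^ n, - (1 / 3 ^ n), 1 / 5 ^ n).
    split; [apply inNT|]. unfold dist3.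
    replace ((1 / 2 ^ n - 1 / 2 ^ n) ^ 2 + (- (1 / 3 ^ n) - - (1 / 3 ^ n)) ^ 2 +
     (1 / 5 ^ n - 1 / 5 ^ n) ^ 2) with 0 by ring.
    rewrite sqrt_0. lra.
  - intros [eps [He Hq]].
    assert (H2 : 0 < 2 ^ n) by (apply pow_lt; lra).
    assert (H3 : 0 < 3 ^ n) by (apply pow_lt; lra).
    assert (H5 : 0 < 5 ^ n) by (apply pow_lt; lra).
    specialize (Hq (1 / 2 ^ n - eps / 2, - (1 / 3 ^ n), 1 / 5 ^ n)).
    assert (Hd : dist3 (1 / 2 ^ n, - (1 / 3 ^ n), 1 / 5 ^ n)
                       (1 / 2 ^ n - eps / 2, - (1 / 3 ^ n), 1 / 5 ^ n) < eps).
    { unfold dist3.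
      replace ((1 / 2 ^ n - (1 / 2 ^ n - eps / 2)) ^ 2 + (- (1 / 3 ^ n) - - (1 / 3 ^ n)) ^ 2 +
       (1 / 5 ^ n - 1 / 5 ^ n) ^ 2) with ((eps/2)^2) by ring.
      rewrite sqrt_pow2 by lra. lra. }
    specialize (Hq Hd n). simpl in Hq.
    replace (2 ^ n * (1 / 2 ^ n - eps / 2) + 2 * 3 ^ n * - (1 / 3 ^ n) + 5 ^ n * (1 / 5 ^ n))
      with (- (2 ^ n * (eps / 2))) in Hq by (field; lra).
    nra.
Qed.
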